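(* Let constants $C>0$ and $r>0$ be given. For every pair of positive integers $M,n$, let $\boldsymbol{x}_1,\dots,\boldsymbol{x}_M$ be random points that are continuously distributed in the unit ball $\mathbb{B}_n\subset\mathbb{R}^n$, and assume that their conditional densities satisfy $$\rho_n(\boldsymbol{x}_i \mid \boldsymbol{x}_j=\boldsymbol{y}_j,\ \forall j\neq i)\le \frac{C}{r^n V_n(\mathbb{B}_n)}$$ for every $n$, every index $i\in\{1,\dots,M\}$ and all points $\boldsymbol{y}_1,\dots,\boldsymbol{y}_{i-1},\boldsymbol{y}_{i+1},\dots,\boldsymbol{y}_M\in\mathbb{R}^n$. Then this family of joint distributions has the SmAC property with the same constant $C$, with any $B\in(0,1)$, and with $A=Br$.
   Context: $\mathbb{B}_n$ is the unit ball in $\mathbb{R}^n$ and $V_n$ is $n$-dimensional Lebesgue measure. We consider a family of joint distributions of $\boldsymbol{x}_1,\dots,\boldsymbol{x}_M\in\mathbb{R}^n$, one for each pair of positive integers $(M,n)$. This family has the SmAC (Smeared Absolute Continuity) property if there exist constants $A>0$, $B\in(0,1)$, $C>0$ (independent of $M$ and $n$) such that for every positive integer $n$, every convex set $S\subset\mathbb{R}^n$ with $V_n(S)/V_n(\mathbb{B}_n)\le A^n$, every index $i\in\{1,\dots,M\}$, and all points $\boldsymbol{y}_1,\dots,\boldsymbol{y}_{i-1},\boldsymbol{y}_{i+1},\dots,\boldsymbol{y}_M\in\mathbb{R}^n$, $$\mathbb{P}(\boldsymbol{x}_i\in\mathbb{B}_n\setminus S \mid \boldsymbol{x}_j=\boldsymbol{y}_j,\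 \forall j\neq i)\ge 1-CB^n.$$ *)

(* Defs.v *)
From HB Require Import structures.
From mathcomp Require Import all_boot all_order all_algebra.
From mathcomp Require Import all_classical all_reals all_analysis.
Set Implicit Arguments. Unset Strict Implicit. Unset Printing Implicit Defensive.
Import Order.TTheory GRing.Theory Num.Theory.
Local Open Scope classical_set_scope.
Local Open Scope ring_scope.

Section Defs.
Context {R : realType}.

Fixpoint iter_int (T : Type) (I : (T -> \bar R) -> \bar R) (m : nat)
  : (m.-tuple T -> \bar R) -> \bar R :=
  match m return (m.-tuple T -> \bar R) -> \bar R with
  | 0 => fun f => f [tuple]
  | m'.+1 => fun f => I (fun x => iter_int I (fun t => f (cons_tuple x t)))
  end.

(* Lebesgue integral on R^n (points of R^n are n.-tuples of reals),
   as the iterated one-dimensional Lebesgue integral. *)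
Definition intn (n : nat) : (n.-tuple R -> \bar R) -> \bar R :=
  @iter_int _ (fun g : R -> \bar R => (\int[@lebesgue_measure R]_x g x)%E) n.

Definition Vn (n : nat) (A : set (n.-tuple R)) : \bar R :=
  intn (fun t => (\1_A t)%:E).

Definition intMn (M n : nat) : (M.-tuple (n.-tuple R) -> \bar R) -> \bar R :=
  @iter_int _ (@intn n) M.

Definition enorm (n : nat) (t : n.-tuple R) : R :=
  Num.sqrt (\sum_(i < n) tnth t i ^+ 2).

Definition unit_ball (n : nat) : set (n.-tuple R) := [set t | enorm t <= 1].
Arguments unit_ball n : clear implicits.

Definition convex_set (n : nat) (S : set (n.-tuple R)) : Prop :=
  forall x y, S x -> S y -> forall t : R, 0 <= t <= 1 ->
    S [tuple t * tnth x i + (1 - t) * tnth y i | i < n].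

Definition replace (M n : nat) (y : M.-tuple (n.-tuple R)) (i : 'I_M)
  (z : n.-tuple R) : M.-tuple (n.-tuple R) :=
  [tuple if j == i then z else tnth y j | j < M].

(* A joint distribution of x_1..x_M in R^n given by a joint density, together
   with conditional densities: cdens i y is the density of x_i given
   x_j = tnth y j for all j <> i (the entry tnth y i is irrelevant). *)
Record joint_model (M n : nat) := JointModel {
  jdens : M.-tuple (n.-tuple R) -> R;
  cdens : 'I_M -> M.-tuple (n.-tuple R) -> n.-tuple R -> R }.

Definition marginal_others (M n : nat) (P : joint_model M n) (i : 'I_M)
  (y : M.-tuple (n.-tuple R)) : \bar R :=
  intn (fun w => (jdens P (replace y i w))%:E).

(* Well-formedness: continuous distribution in the unit ball, with
   conditional densities that are (versions of) the conditional densities. *)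
Definition is_joint_model (M n : nat) (P : joint_model M n) : Prop :=
  [/\ measurable_fun setT (jdens P),
      (forall y, 0 <= jdens P y),
      (forall y, ~ (forall j, unit_ball n (tnth y j)) -> jdens P y = 0),
      intMn (fun y => (jdens P y)%:E) = 1%E &
      forall i y,
      [/\ measurable_fun setT (cdens P i y) /\ (forall z, 0 <= cdens P i y z),
          (forall z, ~ unit_ball n z -> cdens P i y z = 0),
          intn (fun z => (cdens P i y z)%:E) = 1%E,
          (forall y', (forall j, j != i -> tnth y j = tnth y' j) ->
                      cdens P i y = cdens P i y') &
          (forall z, (jdens P (replace y i z))%:E =
                     ((cdens P i y z)%:E * marginal_others P i y)%E)]].

Definition cond_prob (M n : nat) (P : joint_model M n) (i : 'I_M)
  (y : M.-tuple (n.-tuple R)) (A : set (n.-tuple R)) : \bar R :=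
  intn (fun z => (\1_A z * cdens P i y z)%:E).

Definition SmAC_with (A B C : R) (fam : forall M n : nat, joint_model M n) : Prop :=
  [/\ 0 < A, 0 < B < 1, 0 < C &
   forall (M n : nat), (0 < M)%N -> (0 < n)%N ->
   forall S : set (n.-tuple R), convex_set S ->
   (Vn S <= (A ^+ n)%:E * Vn (unit_ball n))%E ->
   forall (i : 'I_M) (y : M.-tuple (n.-tuple R)),
     ((1 - C * B ^+ n)%:E <= cond_prob (fam M n) i y (unit_ball n `\` S))%E].

End Defs.
Arguments unit_ball {R} n.

(* Main.v *)
Require Import Defs.
From HB Require Import structures.
From mathcomp Require Import all_boot all_order all_algebra.
From mathcomp Require Import all_classical all_reals all_analysis.
From mathcomp Require Import measurable_realfun.
From mathcomp Require Import ring lra.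
Import Order.TTheory GRing.Theory Num.Theory.
Local Open Scope classical_set_scope.
Local Open Scope ring_scope.


Local Open Scope ereal_scope.

Section Iter.
Context {R : realType}.
Local Notation leb := (@lebesgue_measure R).

Lemma ge0_le_integralT (f g : R -> \bar R) :
  (forall x, 0 <= f x) -> (forall x, f x <= g x) ->
  \int[leb]_x f x <= \int[leb]_x g x.
Proof.
move=> f0 fg.
have g0 : forall x, 0 <= g x by move=> x; exact: le_trans (f0 x) (fg x).
rewrite (ge0_integralTE leb f0) (ge0_integralTE leb g0).
apply: ereal_sup_le => _ [h /= hf <-]; exists h => //= x.
exact: le_trans (hf x) (fg x).
Qed.

Lemma intn_ge0 n (f : n.-tuple R -> \bar R) :
  (forall t, 0 <= f t) -> 0 <= intn f.
Proof.
elim: n f => [|n IH] f f0; first exact: f0.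
by apply: integral_ge0 => x _; apply: IH => t; exact: f0.
Qed.

Lemma intn_le n (f g : n.-tuple R -> \bar R) :
  (forall t, 0 <= f t) -> (forall t, f t <= g t) -> intn f <= intn g.
Proof.
elim: n f g => [|n IH] f g f0 fg; first exact: fg.
apply: ge0_le_integralT => x; first by apply: intn_ge0 => t; exact: f0.
by apply: IH => t; [exact: f0|exact: fg].
Qed.

Lemma measurable_cons_pair n :
  measurable_fun [set: R * n.-tuple R]
    (fun p : R * n.-tuple R => cons_tuple p.1 p.2).
Proof. exact: measurable_cons. Qed.

Lemma intn_measurable n d (X : measurableType d)
  (h : X * n.-tuple R -> \bar R) :
  measurable_fun setT h -> (forall p, 0 <= h p) ->
  measurable_fun setT (fun x => intn (fun t => h (x, t))).
Proof.
elim: n d X h => [|n IH] d X h mh h0.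
  rewrite /=.
  apply: (measurableT_comp mh).
  exact: measurable_fun_pair.
pose h' := fun q : (X * R) * n.-tuple R => h (q.1.1, cons_tuple q.1.2 q.2).
have mh' : measurable_fun setT h'.
  apply: (measurableT_comp mh).
  apply: measurable_fun_pair.
    exact: (measurableT_comp measurable_fst measurable_fst).
  apply: measurable_cons => //.
  exact: (measurableT_comp measurable_snd measurable_fst).
have := IH _ _ h' mh' (fun q => h0 _).
move=> mG.
have := @measurable_fun_fubini_tonelli_F _ _ _ _ _ leb _ mG.
apply => //.
move=> p; apply: intn_ge0 => t; exact: h0.
Qed.


Lemma measurable_sec2 n (f : n.+1.-tuple R -> \bar R) :
  measurable_fun setT f ->
  measurable_fun [set: R * n.-tuple R] (fun p => f (cons_tuple p.1 p.2)).
Proof. by move=> mf; apply: (measurableT_comp mf); exact: measurable_cons. Qed.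

Lemma measurable_sec n (f : n.+1.-tuple R -> \bar R) (x : R) :
  measurable_fun setT f -> measurable_fun setT (fun t => f (cons_tuple x t)).
Proof. by move=> mf; apply: (measurableT_comp mf); exact: measurable_cons. Qed.

Arguments measurable_sec2 {n f}.
Arguments measurable_sec {n f}.

Lemma mR {f : R -> \bar R} : measurable_fun setT f ->
  measurable_fun (setT : set (measurableTypeR R)) f.
Proof. by []. Qed.

Lemma intnS n (f : n.+1.-tuple R -> \bar R) :
  intn f = \int[leb]_x intn (fun t => f (cons_tuple x t)).
Proof. by []. Qed.

Lemma intnD n (f g : n.-tuple R -> \bar R) :
  measurable_fun setT f -> measurable_fun setT g ->
  (forall t, 0 <= f t) -> (forall t, 0 <= g t) ->
  intn (fun t => f t + g t) = intn f + intn g.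
Proof.
elim: n f g => [//|n IH] f g mf mg f0 g0.
rewrite intnS -ge0_integralD //; last 4 first.
- by move=> x _; apply: intn_ge0.
- exact: (mR (@intn_measurable n _ _ (fun p => f (cons_tuple p.1 p.2)) (measurable_sec2 mf) (fun p => f0 _))).
- by move=> x _; apply: intn_ge0.
- exact: (mR (@intn_measurable n _ _ (fun p => g (cons_tuple p.1 p.2)) (measurable_sec2 mg) (fun p => g0 _))).
apply: eq_integral => x _.
exact: IH (measurable_sec x mf) (measurable_sec x mg) _ _.
Qed.

Lemma intnZ n (k : R) (f : n.-tuple R -> \bar R) :
  measurable_fun setT f -> (forall t, 0 <= f t) -> (0 <= k)%R ->
  intn (fun t => k%:E * f t) = k%:E * intn f.
Proof.
elim: n f => [//|n IH] f mf f0 k0.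
rewrite intnS -ge0_integralZl_EFin //; last 2 first.
- by move=> x _; apply: intn_ge0.
- exact: (mR (@intn_measurable n _ _ (fun p => f (cons_tuple p.1 p.2)) (measurable_sec2 mf) (fun p => f0 _))).
apply: eq_integral => x _.
exact: IH (measurable_sec x mf) _ _.
Qed.

End Iter.

Local Close Scope ereal_scope.

Section Geo.
Context {R : realType}.

Definition clos {n} (S : set (n.-tuple R)) : set (n.-tuple R) :=
  [set w | forall e : R, (0 < e)%R ->
     exists s, S s /\ forall i, (`|tnth w i - tnth s i| < e)%R].

Lemma sub_clos n (S : set (n.-tuple R)) : S `<=` clos S.
Proof. by move=> w Sw e e0; exists w; split => // i; rewrite subrr normr0. Qed.

Definition box {n} (q : n.-tuple rat) (k : nat) : set (n.-tuple R) :=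
  [set w | forall i, (`|tnth w i - ratr (tnth q i)| < k.+1%:R^-1)%R].

Lemma box_measurable n q k : measurable (@box n q k).
Proof.
have -> : @box n q k = \bigcap_(i in [set: 'I_n])
   ((fun w : n.-tuple R => tnth w i) @^-1` `](ratr (tnth q i) - k.+1%:R^-1)%R, (ratr (tnth q i) + k.+1%:R^-1)%R[).
  apply/seteqP; split => w /=.
    by move=> H i _ /=; rewrite in_itv /= -ltr_distlC distrC; exact: H.
  by move=> H i; have := H i I; rewrite /= in_itv /= -ltr_distlC distrC.
apply: fin_bigcap_measurable; first exact: finite_finset.
move=> i _; rewrite -[X in measurable X]setTI.
exact: (measurable_tnth i) (measurable_itv _).
Qed.

Lemma rat_approx n (w : n.-tuple R) (r : R) : (0 < r)%R ->
  exists q : n.-tuple rat, forall i, (`|tnth w i - ratr (tnth q i)| < r)%R.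
Proof.
move=> r0.
have H : forall i, exists q : rat, (`|tnth w i - ratr q| < r)%R.
  move=> i; have [|q] := @rat_in_itvoo R (tnth w i - r) (tnth w i + r).
    by lra.
  by rewrite in_itv /= -ltr_distlC => H; exists q.
exists [tuple projT1 (cid (H i)) | i < n] => i.
by rewrite tnth_mktuple; exact: projT2 (cid (H i)).
Qed.


Lemma clos_measurable n (S : set (n.-tuple R)) : measurable (clos S).
Proof.
pose U k := \bigcup_(q : n.-tuple rat)
  (box q k `&` [set _ | exists s, S s /\ box q k s]).
have -> : clos S = \bigcap_k U k.
  apply/seteqP; split => w.
    move=> wS k _.
    have r0 : (0 < k.+1%:R^-1 / 2 :> R)%R by rewrite divr_gt0 // invr_gt0 ltr0n.
    have [s [Ss ws]] := wS _ r0.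
    have [q wq] := @rat_approx n w _ r0.
    exists q => //; split.
      move=> i; have x0 : (0 < k.+1%:R^-1 :> R)%R by rewrite invr_gt0 ltr0n.
      have := wq i; move: (k.+1%:R^-1 : R) x0 => x; lra.
    exists s; split => // i.
    rewrite (_ : tnth s i - _ = (tnth s i - tnth w i) + (tnth w i - ratr (tnth q i)))%R; last by ring.
    apply: le_lt_trans (ler_normD _ _) _.
    have h1 := ws i; rewrite distrC in h1; have h2 := wq i.
    move: (k.+1%:R^-1 : R) h1 h2 => x; lra.
  move=> wU e e0.
  pose k := Num.Def.truncn (2 / e)%R.
  have hk : (2 / e < k.+1%:R)%R by apply: truncnS_gt.
  have [q _ [wq [s [Ss sq]]]] := wU k I.
  exists s; split => // i.
  rewrite (_ : tnth w i - _ = (tnth w i - ratr (tnth q i)) - (tnth s i - ratr (tnth q i)))%R; last by ring.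
  apply: le_lt_trans (ler_normB _ _) _.
  have ke : (2 * k.+1%:R^-1 < e :> R)%R.
    rewrite ltr_pdivrMr ?ltr0n// mulrC -ltr_pdivrMr //.
  have := wq i; have := sq i; move: (k.+1%:R^-1 : R) ke => x; lra.
apply: bigcapT_measurable => k.
apply: countable_bigcupT_measurable; first exact: countableP.
move=> q.
have [P|nP] := pselect (exists s, S s /\ box q k s).
  rewrite (_ : [set _ | _] = setT); first by rewrite setIT; exact: box_measurable.
  by apply/seteqP; split.
rewrite (_ : [set _ | _] = set0) ?setI0 //.
by apply/seteqP; split => //.
Qed.

End Geo.


Section Geo2.
Context {R : realType}.

Lemma tnth_cons0 n (x : R) (t : n.-tuple R) : tnth (cons_tuple x t) ord0 = x.
Proof. exact: tnth0. Qed.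

Lemma tnth_consS n (x : R) (t : n.-tuple R) j :
  tnth (cons_tuple x t) (lift ord0 j) = tnth t j.
Proof. exact: tnthS. Qed.

Definition sec {n} (S : set (n.+1.-tuple R)) (x : R) : set (n.-tuple R) :=
  [set t | S (cons_tuple x t)].

Lemma conv_cons n (S : set (n.+1.-tuple R)) (y z : R) (s u : n.-tuple R) (l : R) :
  Defs.convex_set S -> (0 <= l <= 1) -> S (cons_tuple y s) -> S (cons_tuple z u) ->
  S (cons_tuple (l * y + (1 - l) * z)
        [tuple l * tnth s i + (1 - l) * tnth u i | i < n]).
Proof.
move=> cS l01 Sy Sz.
have := cS _ _ Sy Sz l l01.
congr S; apply: eq_from_tnth => i.
rewrite tnth_mktuple.
case: (unliftP ord0 i) => [j ->|->].
  by rewrite !tnth_consS tnth_mktuple.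
by rewrite !tnth_cons0.
Qed.

Arguments conv_cons {n S y z s u l}.

Lemma convex_sec n (S : set (n.+1.-tuple R)) x :
  Defs.convex_set S -> Defs.convex_set (sec S x).
Proof.
move=> cS a b Sa Sb l l01; rewrite /sec /=.
have := conv_cons cS l01 Sa Sb.
by rewrite (_ : l * x + (1 - l) * x = x) //; ring.
Qed.


Lemma conv_step n (S : set (n.+1.-tuple R)) (y z x : R) (s u : n.-tuple R) :
  Defs.convex_set S -> S (cons_tuple y s) -> S (cons_tuple z u) ->
  (z < x <= y) \/ (y <= x < z) ->
  exists l : R, [/\ 0 <= l <= 1, (1 - l) * `|x - z| <= `|y - x| &
    S (cons_tuple x [tuple l * tnth s i + (1 - l) * tnth u i | i < n])].
Proof.
move=> cS Sy Sz hx.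
have Dn0 : y - z != 0.
  by apply/eqP => h; case: hx => /andP[h1 h2]; lra.
pose l := (x - z) / (y - z).
have lD : l * (y - z) = x - z by rewrite /l mulrVK // unitfE.
have l01 : 0 <= l <= 1.
  case: hx => /andP[h1 h2].
    have D0 : 0 < y - z by lra.
    apply/andP; split; first by rewrite /l divr_ge0 //; lra.
    by rewrite /l ler_pdivrMr //; lra.
  have D0 : y - z < 0 by lra.
  apply/andP; split; first by rewrite /l ler_ndivlMr //; lra.
  by rewrite /l ler_ndivrMr //; lra.
exists l; split => //.
- case/andP: l01 => l0 l1.
  case: hx => /andP[h1 h2].
    rewrite !ger0_norm; [|lra|lra]; nra.
  rewrite (ltr0_norm (_ : x - z < 0)); last lra.
  rewrite (ler0_norm (_ : y - x <= 0)); last lra.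
  nra.
- have := conv_cons cS l01 Sy Sz.
  by rewrite (_ : l * y + (1 - l) * z = x) //; lra.
Qed.


Lemma bound_core (l d e A X M dist W1 W2 : R) :
  0 <= l <= 1 -> 0 <= W1 -> W1 < d -> W2 <= M -> (1 - l) * dist <= d ->
  M = dist * A -> 0 <= A -> 0 <= X -> d + d * A + X = e / 2 -> 0 < e ->
  l * W1 + (1 - l) * W2 < e.
Proof.
move=> /andP[l0 l1] W10 W1d W2M hd MA A0 X0 hc e0.
have t1 : l * W1 <= l * d by apply: ler_wpM2l => //; exact: ltW.
have t2 : (1 - l) * W2 <= (1 - l) * M by apply: ler_wpM2l => //; lra.
have t3 : (1 - l) * M <= d * A.
  by rewrite MA mulrA; apply: ler_wpM2r.
have t4 : l * d <= d.
  have d0 : 0 <= d by lra.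
  by rewrite -[leRHS]mul1r; apply: ler_wpM2r.
lra.
Qed.


Lemma le_sum_term n (F : 'I_n -> R) i : (forall j, 0 <= F j) ->
  F i <= \sum_(j < n) F j.
Proof.
move=> F0; rewrite (bigD1 i) //= -[leLHS]addr0; apply: lerD => //.
by apply: sumr_ge0 => j _.
Qed.

Lemma norm_conv (l w s u : R) : 0 <= l <= 1 ->
  `|w - (l * s + (1 - l) * u)| <= l * `|w - s| + (1 - l) * `|w - u|.
Proof.
move=> /andP[l0 l1].
rewrite (_ : w - _ = l * (w - s) + (1 - l) * (w - u)); last by ring.
apply: le_trans (ler_normD _ _) _.
rewrite !normrM (ger0_norm l0) (ger0_norm (_ : 0 <= 1 - l)) //; lra.
Qed.

Lemma clos_sec n (S : set (n.+1.-tuple R)) (a b x : R) (u v : n.-tuple R) :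
  Defs.convex_set S -> a < x < b -> S (cons_tuple a u) -> S (cons_tuple b v) ->
  forall w, clos S (cons_tuple x w) -> clos (sec S x) w.
Proof.
move=> cS /andP[ax xb] Sa Sb w cw e e0.
pose Mu := \sum_(i < n) `|tnth w i - tnth u i|.
pose Mv := \sum_(i < n) `|tnth w i - tnth v i|.
have Mui i : `|tnth w i - tnth u i| <= Mu by apply: le_sum_term.
have Mvi i : `|tnth w i - tnth v i| <= Mv by apply: le_sum_term.
have Mu0 : 0 <= Mu by apply: sumr_ge0.
have Mv0 : 0 <= Mv by apply: sumr_ge0.
pose A := Mu / (x - a).
pose B := Mv / (b - x).
have A0 : 0 <= A by apply: divr_ge0 => //; lra.
have B0 : 0 <= B by apply: divr_ge0 => //; lra.
pose c := 1 + A + B.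
have c0 : 0 < c by rewrite /c; lra.
pose d := e / (2 * c).
have d0 : 0 < d by apply: divr_gt0 => //; lra.
have dc : d + d * A + d * B = e / 2.
  have -> : d + d * A + d * B = d * c by rewrite /c; ring.
  rewrite /d; field.
  by rewrite gt_eqF.
have [s [Ss ws]] := cw d d0.
move: Ss ws; case/tupleP: s => y s' Ss ws.
have hy : `|x - y| < d.
  by have := ws ord0; rewrite tnth_cons0 tnth0.
have hs j : `|tnth w j - tnth s' j| < d.
  by have := ws (lift ord0 j); rewrite tnth_consS tnthS.
have Ss' : S (cons_tuple y s') by [].
have [xy|yx] := lerP x y.
- have [|l [l01 hl Sp]] := @conv_step n S y a x s' u cS Ss' Sa.
    by left; rewrite ax xy.
  exists [tuple l * tnth s' i + (1 - l) * tnth u i | i < n]; split => // i.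
  rewrite tnth_mktuple; apply: le_lt_trans (norm_conv _ _ _ _ l01) _.
  apply: (@bound_core l d e A (d * B) Mu (x - a) _ _ l01 (normr_ge0 _) (hs i) (Mui i)) => //.
  + rewrite -(gtr0_norm (_ : 0 < x - a)); last lra.
    apply: le_trans hl _; rewrite distrC; exact: ltW.
  + by rewrite /A mulrC divfK //; lra.
  + exact: mulr_ge0 (ltW d0) B0.
- have [|l [l01 hl Sp]] := @conv_step n S y b x s' v cS Ss' Sb.
    by right; rewrite xb (ltW yx).
  exists [tuple l * tnth s' i + (1 - l) * tnth v i | i < n]; split => // i.
  rewrite tnth_mktuple; apply: le_lt_trans (norm_conv _ _ _ _ l01) _.
  apply: (@bound_core l d e B (d * A) Mv (b - x) _ _ l01 (normr_ge0 _) (hs i) (Mvi i)) => //.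
  + rewrite -(gtr0_norm (_ : 0 < b - x)); last lra.
    rewrite distrC; apply: le_trans hl _; rewrite distrC; exact: ltW.
  + by rewrite /B mulrC divfK //; lra.
  + exact: mulr_ge0 (ltW d0) A0.
  + by rewrite -dc; lra.
Qed.

End Geo2.


Local Open Scope ereal_scope.
Section Q.
Context {R : realType}.
Local Notation leb := (@lebesgue_measure R).

Lemma indic_ge0E T (A : set T) x : 0 <= ((\1_A x : R)%:E).
Proof. by rewrite lee_fin indicE ler0n. Qed.

Lemma indic_le T T' (A : set T) (B : set T') x y : (A x -> B y) ->
  (\1_A x : R)%:E <= (\1_B y : R)%:E.
Proof.
move=> AB; rewrite lee_fin !indicE.
have [Ax|nAx] := pselect (A x).
  by rewrite (mem_set Ax) (mem_set (AB Ax)).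
by rewrite (memNset nAx) ler0n.
Qed.

Lemma clos_le n (S : set (n.-tuple R)) : Defs.convex_set S ->
  intn (fun t => (\1_(clos S) t : R)%:E) <= intn (fun t => (\1_S t : R)%:E).
Proof.
elim: n S => [|n IH] S cS.
  apply: indic_le => cSt.
  have [s [Ss _]] := cSt 1%R ltr01.
  by rewrite (tuple0 s) -(tuple0 [tuple]) in Ss.
rewrite !intnS.
pose P x := exists t, S (cons_tuple x t).
pose Lo x := (exists t, clos S (cons_tuple x t)) /\ ~ (exists a, (a < x)%R /\ P a).
pose Hi x := (exists t, clos S (cons_tuple x t)) /\ ~ (exists b, (x < b)%R /\ P b).
have near x y t : clos S (cons_tuple x t) -> (x < y)%R -> exists a, (a < y)%R /\ P a.
  move=> cx xy; have [|s [Ss hs]] := cx (y - x)%R; first by rewrite subr_gt0.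
  move: Ss hs; case/tupleP: s => a s' Ss hs.
  exists a; split; last by exists s'.
  have := hs ord0; rewrite tnth_cons0 tnth0 => h.
  have := ler_norm (a - x)%R; rewrite distrC; lra.
have near' x y t : clos S (cons_tuple x t) -> (y < x)%R -> exists b, (y < b)%R /\ P b.
  move=> cx xy; have [|s [Ss hs]] := cx (x - y)%R; first by rewrite subr_gt0.
  move: Ss hs; case/tupleP: s => a s' Ss hs.
  exists a; split; last by exists s'.
  have := hs ord0; rewrite tnth_cons0 tnth0 => h.
  have := ler_norm (x - a)%R; lra.
have [c1 Hc1] : exists c1, forall x, Lo x -> x = c1.
  have [[x0 Lx0]|nL] := pselect (exists x, Lo x); last first.
    by exists 0%R => x Lx; exfalso; apply: nL; exists x.
  exists x0 => x Lx; apply/eqP; rewrite eq_le; apply/andP; split.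
    rewrite leNgt; apply/negP => x0x.
    case: Lx => _; apply; case: Lx0 => [[t ct] _]; exact: near ct x0x.
  rewrite leNgt; apply/negP => xx0.
  case: Lx0 => _; apply; case: Lx => [[t ct] _]; exact: near ct xx0.
have [c2 Hc2] : exists c2, forall x, Hi x -> x = c2.
  have [[x0 Lx0]|nL] := pselect (exists x, Hi x); last first.
    by exists 0%R => x Lx; exfalso; apply: nL; exists x.
  exists x0 => x Lx; apply/eqP; rewrite eq_le; apply/andP; split.
    rewrite leNgt; apply/negP => x0x.
    case: Lx0 => _; apply; case: Lx => [[t ct] _]; exact: near' ct x0x.
  rewrite leNgt; apply/negP => xx0.
  case: Lx => _; apply; case: Lx0 => [[t ct] _]; exact: near' ct xx0.
pose G x := intn (fun t => (\1_(clos S) (cons_tuple x t) : R)%:E).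
pose H x := intn (fun t => (\1_S (cons_tuple x t) : R)%:E).
have GH x : x != c1 -> x != c2 -> G x <= H x.
  move=> xc1 xc2; rewrite /G /H.
  have [[[a [ax [u Sa]]] [b [xb [v Sb]]]]|nab] :=
    pselect ((exists a, (a < x)%R /\ P a) /\ (exists b, (x < b)%R /\ P b)).
    apply: (@le_trans _ _ (intn (fun t => (\1_(clos (sec S x)) t : R)%:E))).
      apply: intn_le => t; first exact: indic_ge0E.
      have axb : (a < x < b)%R by rewrite ax xb.
      apply: indic_le; exact: (@clos_sec _ n S a b x u v cS axb Sa Sb t).
    apply: le_trans (IH _ (@convex_sec _ n S x cS)) _.
    apply: intn_le => t; first exact: indic_ge0E.
    by apply: indic_le.
  apply: intn_le => t; first exact: indic_ge0E.
  apply: indic_le => ct; exfalso.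
  case/not_andP: nab => nab.
    by move/eqP: xc1; apply; apply: Hc1; split => //; exists t.
  by move/eqP: xc2; apply; apply: Hc2; split => //; exists t.
have G0 x : 0 <= G x by apply: intn_ge0 => t; exact: indic_ge0E.
have H0 x : 0 <= H x by apply: intn_ge0 => t; exact: indic_ge0E.
have mh : measurable_fun setT
    (fun p : R * n.-tuple R => (\1_(clos S) (cons_tuple p.1 p.2) : R)%:E).
  apply/(measurable_EFinP _ (fun p : R * n.-tuple R => (\1_(clos S) (cons_tuple p.1 p.2) : R))).
  apply: (measurableT_comp (measurable_indic (@clos_measurable _ n.+1 S))).
  exact: measurable_cons.
have mG : measurable_fun setT G.
  have HH := (@intn_measurable _ n _ _ _ mh); apply: HH => p; exact: indic_ge0E.
change (\int[leb]_x G x <= \int[leb]_x H x).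
have m1 : measurable (setT `\ c1 : set R) by apply: measurableD.
have m2 : measurable ((setT `\ c1) `\ c2 : set R) by apply: measurableD.
rewrite -(integral_setD1 (r := c1)) //; last exact: measurable_funS mG.
rewrite -(integral_setD1 (r := c2)) //; last exact: measurable_funS mG.
rewrite integral_mkcond; apply: ge0_le_integralT => x; rewrite patchE.
  by case: ifP.
case: ifP => [/set_mem [[_ /eqP xc1] /eqP xc2]|_] //.
exact: GH.
Qed.

End Q.

Local Close Scope ereal_scope.

Local Open Scope ereal_scope.
Section Main.
Context {R : realType}.

Lemma intn0 n : intn (fun _ : n.-tuple R => (0 : \bar R)) = 0.
Proof.
elim: n => [//|n IH]; rewrite intnS.
under eq_integral do rewrite IH.
exact: integral0.
Qed.

Lemma fin_arith (X Y : \bar R) (c : R) : 0 <= X -> 0 <= Y -> X + Y = 1 ->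
  Y <= c%:E -> (1 - c)%:E <= X.
Proof.
case: X => [x| |] //; case: Y => [y| |] //=.
- move=> _ _ [] hxy; rewrite !lee_fin; lra.
Qed.

Lemma mfE n (f : n.-tuple R -> R) (A : set (n.-tuple R)) :
  measurable A -> measurable_fun setT f ->
  measurable_fun setT (fun z => (\1_A z * f z)%:E).
Proof.
move=> mA mf; apply/(measurable_EFinP _ (fun z => \1_A z * f z)%R).
exact: measurable_funM (measurable_indic mA) mf.
Qed.

End Main.

Local Close Scope ereal_scope.

Theorem proposition1 (R : realType) (C r : R) (hC : 0 < C) (hr : 0 < r)
  (fam : forall M n : nat, @joint_model R M n)
  (hfam : forall M n : nat, (0 < M)%N -> (0 < n)%N -> is_joint_model (fam M n))
  (hbound : forall M n : nat, (0 < M)%N -> (0 < n)%N ->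
     forall (i : 'I_M) (y : M.-tuple (n.-tuple R)) (z : n.-tuple R),
       cdens (fam M n) i y z <= C / (r ^+ n * fine (Vn (unit_ball n)))) :
  forall B : R, 0 < B < 1 -> SmAC_with (B * r) B C fam.
Proof.
move=> B /andP[B0 B1].
split => //; first exact: mulr_gt0; first by rewrite B0 B1.
move=> M n M0 n0 S cS hS i y.
have [mj j0 jsupp jint hc] := hfam M n M0 n0.
have [[mf f0] fsupp fint _ _] := hc i y.
set f := cdens (fam M n) i y in mf f0 fsupp fint *.
set V := Vn (unit_ball n) in hS.
set K := (C / (r ^+ n * fine V))%R.
have hb z : (f z <= K)%R by exact: hbound.
have Vn0 : fine V != 0%R.
  apply/negP => /eqP V0.
  have K0 : K = 0%R by rewrite /K V0 mulr0 invr0 mulr0.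
  have : (intn (fun z => (f z)%:E) <= intn (fun _ : n.-tuple R => (0 : \bar R)))%E.
    apply: intn_le => z; first by rewrite lee_fin.
    by rewrite lee_fin -K0.
  by rewrite intn0 fint lee_fin ler10.
have key (v : \bar R) : fine v != 0%R -> (0 <= v)%E -> v = (fine v)%:E.
  by case: v => [v'| |] //=; rewrite eqxx.
have V0 : (0 <= V)%E by apply: intn_ge0 => t; exact: indic_ge0E.
have VE := key V Vn0 V0.
have Vp : (0 < fine V)%R by rewrite lt_neqAle eq_sym Vn0 fine_ge0.
have K0 : (0 <= K)%R.
  by apply: divr_ge0; [exact: ltW|apply: mulr_ge0; [apply: exprn_ge0; exact: ltW|exact: ltW]].
set W := clos S.
have mW : measurable W by exact: clos_measurable.
have SW : S `<=` W by exact: sub_clos.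
have ind_ge0 (A : set (n.-tuple R)) z : (0 <= \1_A z :> R)%R by rewrite indicE ler0n.
have step1 : (intn (fun z => (\1_(~` W) z * f z)%:E) <=
    cond_prob (fam M n) i y (unit_ball n `\` S))%E.
  rewrite /cond_prob; apply: intn_le => z.
    by rewrite lee_fin; apply: mulr_ge0.
  rewrite lee_fin !indicE.
  have [wz|nwz] := pselect (W z).
    rewrite (memNset (_ : ~ (~` W) z)) ?mul0r; last by [].
    by apply: mulr_ge0 => //; rewrite ler0n.
  rewrite (mem_set (nwz : (~` W) z)) mul1r.
  have [bz|nbz] := pselect (unit_ball n z).
    rewrite (mem_set (_ : (unit_ball n `\` S) z)) ?mul1r //.
    by split => // Sz; apply: nwz; exact: SW.
  by rewrite (fsupp z nbz); apply: mulr_ge0 => //; rewrite ler0n.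
have mF1 := mfE _ _ _ (measurableC mW) mf.
have mF2 := mfE _ _ _ mW mf.
have dec : intn (fun z => (f z)%:E) =
    (intn (fun z => (\1_(~` W) z * f z)%:E) + intn (fun z => (\1_W z * f z)%:E))%E.
  rewrite -intnD //; last 2 first.
  - by move=> z; rewrite lee_fin; apply: mulr_ge0.
  - by move=> z; rewrite lee_fin; apply: mulr_ge0.
  congr intn; apply: funext => z; rewrite -EFinD -mulrDl !indicE.
  have [wz|nwz] := pselect (W z).
    by rewrite (memNset (_ : ~ (~` W) z)) ?(mem_set wz) ?add0r ?mul1r.
  by rewrite (mem_set (nwz : (~` W) z)) (memNset nwz) addr0 mul1r.
have step3 : (intn (fun z => (\1_W z * f z)%:E) <= K%:E * Vn S)%E.
  apply: (@le_trans _ _ (intn (fun z => K%:E * (\1_W z)%:E))%E).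
    apply: intn_le => z; first by rewrite lee_fin; apply: mulr_ge0.
    by rewrite -EFinM lee_fin mulrC; apply: ler_wpM2r.
  have mI : measurable_fun setT (fun t : n.-tuple R => (\1_W t : R)%:E).
    by apply/(measurable_EFinP _ (fun t : n.-tuple R => (\1_W t : R))); exact: measurable_indic.
  rewrite intnZ //.
  apply: lee_pmul.
  - by rewrite lee_fin.
  - by apply: intn_ge0 => t; exact: indic_ge0E.
  - exact: lexx.
  - exact: clos_le.
have step4 : (K%:E * Vn S <= (C * B ^+ n)%:E)%E.
  apply: (@le_trans _ _ (K%:E * (((B * r) ^+ n)%:E * V))%E).
    apply: lee_pmul.
    - by rewrite lee_fin.
    - by apply: intn_ge0 => t; exact: indic_ge0E.
    - exact: lexx.
    - exact: hS.
  rewrite VE -!EFinM lee_fin le_eqVlt; apply/orP; left; apply/eqP.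
  rewrite /K exprMn; field.
  by rewrite Vn0 /= expf_neq0 // gt_eqF.
have Y0 : (0 <= intn (fun z => (\1_W z * f z)%:E))%E.
  by apply: intn_ge0 => z; rewrite lee_fin; apply: mulr_ge0.
have X0 : (0 <= intn (fun z => (\1_(~` W) z * f z)%:E))%E.
  by apply: intn_ge0 => z; rewrite lee_fin; apply: mulr_ge0.
apply: le_trans step1.
apply: (fin_arith _ _ _ X0 Y0 _ (le_trans step3 step4)).
by rewrite -dec.
Qed.
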